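(* Let $\eta>0$, $\Psi(\boldsymbol x):=\log\sum_{i=1}^N\exp(\sqrt2\eta x_i)$ for $\boldsymbol x\in\mathbb{R}^N$, and $\log\Phi(\boldsymbol x,t)=-\eta^2t+\Psi(\boldsymbol x)$ for $(\boldsymbol x,t)\in\mathbb{R}^{N+1}$ (the logarithm of the total potential $\Phi(\boldsymbol x,t)=\sum_i\exp(\sqrt2\eta x_i-\eta^2t)$). Then $\Psi$ satisfies $(2\sqrt2\eta,2)$-generalized self-concordance on all of $\mathbb{R}^N$ with respect to $\|\cdot\|_\infty$, and $\log\Phi$ satisfies $(2\sqrt2\eta,2)$-generalized self-concordance on all of $\mathbb{R}^{N+1}$ with respect to $\|\cdot\|_*$, where $\|(\boldsymbol x,t)\|_*=\|\boldsymbol x\|_\infty$.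
   Context: A $C^3$ function $f$ on an open set $\mathrm{dom}(f)\subseteq\mathbb{R}^p$ satisfies $(M,2)$-generalized self-concordance in a (semi)norm $\|\cdot\|_*$ on $\mathcal C\subseteq\mathrm{dom}(f)$ if for all $\boldsymbol x\in\mathcal C$ and $\boldsymbol u,\boldsymbol v\in\mathbb{R}^p$: $|\nabla^3f(\boldsymbol x)[\boldsymbol u,\boldsymbol u,\boldsymbol v]|\le M\|\boldsymbol v\|_*\,\boldsymbol u^{\mathsf T}\nabla^2f(\boldsymbol x)\boldsymbol u$. It is global when $\mathcal C=\mathrm{dom}(f)$. *)

(* Defs.v *)
From HB Require Import structures.
From mathcomp Require Import all_boot all_order all_algebra.
From mathcomp Require Import all_classical all_reals all_analysis.
Set Implicit Arguments. Unset Strict Implicit. Unset Printing Implicit Defensive.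
Import Order.TTheory GRing.Theory Num.Theory.
Import numFieldNormedType.Exports.
Local Open Scope classical_set_scope.
Local Open Scope ring_scope.

Section Defs.
Variable R : realType.

Definition linf_norm (N : nat) (x : 'rV[R]_N) : R :=
  \big[Num.max/0]_(i < N) `|x ord0 i|.

Definition Psi (eta : R) (N : nat) (x : 'rV[R]_N) : R :=
  ln (\sum_(i < N) expR (Num.sqrt 2 * eta * x ord0 i)).

Definition logPhi (eta : R) (N : nat) (z : 'rV[R]_N * R) : R :=
  - (eta ^+ 2) * z.2 + Psi eta z.1.

(* (M,2)-generalized self-concordance of f in the (semi)norm nrm on C.
   u^T Hess f(x) u is the second directional derivative 'D_u ('D_u f) x,
   and Hess^3 f(x)[u,u,v] is 'D_v ('D_u ('D_u f)) x; the derivability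
   clauses record (the directional part of) the C^3 requirement. *)
Definition gen_self_concordant2 (V : normedModType R) (f : V -> R)
    (nrm : V -> R) (M : R) (C : set V) : Prop :=
  forall x, C x -> forall u v : V,
    [/\ derivable f x u, derivable ('D_u f) x u,
        derivable ('D_u ('D_u f)) x v &
        `| 'D_v ('D_u ('D_u f)) x | <= M * nrm v * 'D_u ('D_u f) x].

End Defs.

(* Main.v *)
Require Import Defs.
From HB Require Import structures.
From mathcomp Require Import all_boot all_order all_algebra.
From mathcomp Require Import all_classical all_reals all_analysis.
From mathcomp Require Import ring lra.
Import Order.TTheory GRing.Theory Num.Theory.
Import numFieldNormedType.Exports.
Local Open Scope classical_set_scope.
Local Open Scope ring_scope.

Section S.
Variable R : realType.

Lemma dir1 (V : normedModType R) (f : V -> R) x v d :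
  is_derive (0:R) 1 (fun h : R => f (h *: v + x)) d -> is_derive x v f d.
Proof.
case=> H1 H2.
have E : (fun h : R => h^-1 *: (((fun h : R => f (h *: v + x)) \o shift 0) (h *: 1) - (fun h : R => f (h *: v + x)) 0))
  = (fun h => h^-1 *: ((f \o shift x) (h *: v) - f x)).
  apply/funext => h /=; by rewrite addr0 scale0r add0r /GRing.scale /= mulr1.
constructor.
  by move: H1; rewrite /derivable E.
by move: H2; rewrite /derive E.
Qed.

Lemma core_term (w a z y : R) :
  is_derive (0:R) 1 (fun h : R => w * expR (a * (h * z + y))) (w * (a * z) * expR (a * y)).
Proof.
have -> : (fun h : R => w * expR (a * (h * z + y))) = w \*o (expR \o (fun h => a * (h * z + y))).
  by apply/funext.
apply: is_derive_eq.
rewrite mul0r add0r scale0r add0r addr0. rewrite /GRing.scale /=. by rewrite mulr1; ring. Qed.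

Definition E (a : R) N (w : 'I_N -> R) (y : 'rV[R]_N) :=
  \sum_(i < N) w i * expR (a * y ord0 i).
Arguments E a {N} w y.

Lemma E_ext a N (w w' : 'I_N -> R) y : (forall i, w i = w' i) -> E a w y = E a w' y.
Proof. by move=> h; apply: eq_bigr => i _; rewrite h. Qed.

Lemma E0_gt0 a N (hN : (0 < N)%N) y : 0 < E a (fun _ : 'I_N => 1) y.
Proof.
rewrite /E (bigD1 (Ordinal hN)) //=.
apply: (@lt_le_trans _ _ (1 * expR (a * y ord0 (Ordinal hN)))).
  by rewrite mul1r expR_gt0.
rewrite lerDl; apply: sumr_ge0 => i _; by rewrite mul1r expR_ge0.
Qed.

Lemma dD (F G : R -> R) dF dG : is_derive (0:R) 1 F dF -> is_derive (0:R) 1 G dG ->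
  is_derive (0:R) 1 (fun h => F h + G h) (dF + dG).
Proof. move=> h1 h2; exact: is_deriveD. Qed.

Lemma dSum N (F : 'I_N -> R -> R) dF : (forall i, is_derive (0:R) 1 (F i) (dF i)) ->
  is_derive (0:R) 1 (fun h => \sum_(i<N) F i h) (\sum_(i<N) dF i).
Proof.
move=> H; elim: N F dF H => [|n IH] F dF H.
  have -> : (fun h : R => \sum_(i<0) F i h) = (fun _ => 0) by apply/funext=> h; rewrite big_ord0.
  by rewrite big_ord0; exact: is_derive_cst.
have -> : (fun h : R => \sum_(i<n.+1) F i h) = (fun h => \sum_(i<n) F (widen_ord (leqnSn n) i) h + F ord_max h).
  by apply/funext=> h; rewrite big_ord_recr.
rewrite big_ord_recr /=.
apply: (dD (fun h => \sum_(i<n) F (widen_ord (leqnSn n) i) h) (F ord_max) _ _ _ (H ord_max)).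
exact: (IH (fun i => F (widen_ord (leqnSn n) i)) (fun i => dF (widen_ord (leqnSn n) i))).
Qed.

Lemma dE a N (w w' : 'I_N -> R) (z y : 'rV[R]_N) : (forall i, w' i = w i * z ord0 i) ->
  is_derive (0:R) 1 (fun h : R => E a w (h *: z + y)) (a * E a w' y).
Proof.
move=> hw.
have -> : (fun h : R => E a w (h *: z + y)) =
   (fun h : R => \sum_(i < N) w i * expR (a * (h * z ord0 i + y ord0 i))).
  apply/funext => h; rewrite /E; apply: eq_bigr => i _; by rewrite !mxE.
apply: is_derive_eq; first by apply: (@dSum _ (fun i h => w i * expR (a * (h * z ord0 i + y ord0 i)))) => i; exact: core_term.
rewrite /E mulr_sumr; apply: eq_bigr => i _; rewrite hw mul0r add0r scale0r add0r addr0 /GRing.scale /= mulr1; ring.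
Qed.

Lemma dM (F G : R -> R) dF dG : is_derive (0:R) 1 F dF -> is_derive (0:R) 1 G dG ->
  is_derive (0:R) 1 (fun h => F h * G h) (F 0 * dG + G 0 * dF).
Proof. move=> h1 h2; exact: is_deriveM. Qed.

Lemma dB (F G : R -> R) dF dG : is_derive (0:R) 1 F dF -> is_derive (0:R) 1 G dG ->
  is_derive (0:R) 1 (fun h => F h - G h) (dF - dG).
Proof. move=> h1 h2; exact: is_deriveB. Qed.


Lemma dC (F : R -> R) c dF : is_derive (0:R) 1 F dF ->
  is_derive (0:R) 1 (fun h => c * F h) (c * dF).
Proof. move=> h1; exact: is_deriveZ. Qed.

Lemma dV (G : R -> R) dG : G 0 != 0 -> is_derive (0:R) 1 G dG ->
  is_derive (0:R) 1 (fun h => (G h)^-1) (- (G 0)^-2 * dG).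
Proof. move=> h0 h1; exact: is_deriveV. Qed.

Lemma dln (G : R -> R) dG : 0 < G 0 -> is_derive (0:R) 1 G dG ->
  is_derive (0:R) 1 (fun h => ln (G h)) ((G 0)^-1 * dG).
Proof.
move=> h0 h1.
have := @is_derive1_comp _ (@ln R) G 0 _ _ (is_derive1_ln h0) h1. by [].
Qed.


Definition W0 N : 'I_N -> R := fun _ => 1.
Definition Wu N (u : 'rV[R]_N) : 'I_N -> R := fun i => u ord0 i.
Definition Wuv N (u v : 'rV[R]_N) : 'I_N -> R := fun i => u ord0 i * v ord0 i.
Definition Wuuv N (u v : 'rV[R]_N) : 'I_N -> R := fun i => u ord0 i * u ord0 i * v ord0 i.
Arguments Wu {N}. Arguments Wuv {N}. Arguments Wuuv {N}.

Section Psi.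
Variables (a : R) (N : nat) (hN : (0 < N)%N).

Lemma dE0 (z y : 'rV[R]_N) : is_derive (0:R) 1 (fun h : R => E a (@W0 N) (h *: z + y)) (a * E a (Wu z) y).
Proof. by apply: dE => i; rewrite /W0 /Wu mul1r. Qed.
Lemma dEu (u z y : 'rV[R]_N) : is_derive (0:R) 1 (fun h : R => E a (Wu u) (h *: z + y)) (a * E a (Wuv u z) y).
Proof. by apply: dE. Qed.
Lemma dEuu (u z y : 'rV[R]_N) : is_derive (0:R) 1 (fun h : R => E a (Wuv u u) (h *: z + y)) (a * E a (Wuuv u z) y).
Proof. by apply: dE. Qed.

Lemma S0_neq0 y : E a (@W0 N) y != 0.
Proof. by rewrite gt_eqF // E0_gt0. Qed.

Definition D1 (u y : 'rV[R]_N) := (E a (@W0 N) y)^-1 * (a * E a (Wu u) y).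
Definition D2 (u y : 'rV[R]_N) :=
  a * a * (E a (Wuv u u) y * (E a (@W0 N) y)^-1
     - (E a (Wu u) y * (E a (@W0 N) y)^-1) * (E a (Wu u) y * (E a (@W0 N) y)^-1)).
Definition D3 (u v x : 'rV[R]_N) :=
  let S0 := E a (@W0 N) x in
  a * a * a * (E a (Wuuv u v) x / S0 - E a (Wuv u u) x * E a (Wu v) x / S0 ^+ 2
    - 2 * (E a (Wu u) x / S0) * (E a (Wuv u v) x / S0 - E a (Wu u) x * E a (Wu v) x / S0 ^+ 2)).

Lemma claim1 (u y : 'rV[R]_N) :
  is_derive (0:R) 1 (fun h : R => ln (E a (@W0 N) (h *: u + y))) (D1 u y).
Proof.
apply: is_derive_eq; first apply: dln; [exact: E0_gt0 | exact: dE0|].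
by rewrite /= scale0r add0r.
Qed.

Lemma claim2 (u y : 'rV[R]_N) :
  is_derive (0:R) 1 (fun h : R => D1 u (h *: u + y)) (D2 u y).
Proof.
rewrite /D1; apply: is_derive_eq.
  apply: dM; first (apply: dV; [rewrite scale0r add0r; exact: S0_neq0 | exact: dE0]).
  apply: dC; exact: dEu.
rewrite /= !scale0r !add0r /D2.
have := S0_neq0 y. rewrite /Wuv /Wu /W0. move=> H. field. done.
Qed.

Lemma claim3 (u v x : 'rV[R]_N) :
  is_derive (0:R) 1 (fun h : R => D2 u (h *: v + x)) (D3 u v x).
Proof.
rewrite /D2; apply: is_derive_eq.
  apply: dC; apply: dB.
    apply: dM; first exact: dEuu.
    apply: dV; [rewrite scale0r add0r; exact: S0_neq0 | exact: dE0].
  apply: dM; (apply: dM; first exact: dEu); 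
    (apply: dV; [rewrite scale0r add0r; exact: S0_neq0 | exact: dE0]).
rewrite /= !scale0r !add0r /D3.
have := S0_neq0 x. move=> H. field. done.
Qed.


Lemma vi_le (v : 'rV[R]_N) i : `|v ord0 i| <= linf_norm v.
Proof. rewrite /linf_norm; exact: (le_bigmax _ (fun i => `|v ord0 i|) i). Qed.

Lemma expand3 (u v x : 'rV[R]_N) c d :
  E a (fun i => (u ord0 i - c) ^+ 2 * (v ord0 i - d)) x =
  E a (Wuuv u v) x - 2 * c * E a (Wuv u v) x + c ^+ 2 * E a (Wu v) x
  - d * E a (Wuv u u) x + 2 * c * d * E a (Wu u) x - c ^+ 2 * d * E a (@W0 N) x.
Proof.
rewrite /E.
have -> : \sum_(i < N) (u ord0 i - c) ^+ 2 * (v ord0 i - d) * expR (a * x ord0 i) =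
  \sum_(i < N) (Wuuv u v i * expR (a * x ord0 i) + (- (2 * c)) * (Wuv u v i * expR (a * x ord0 i))
    + c ^+ 2 * (Wu v i * expR (a * x ord0 i)) + (- d) * (Wuv u u i * expR (a * x ord0 i))
    + (2 * c * d) * (Wu u i * expR (a * x ord0 i)) + (- (c ^+ 2 * d)) * (@W0 N i * expR (a * x ord0 i))).
  by apply: eq_bigr => i _; rewrite /Wuuv /Wuv /Wu /W0; ring.
rewrite !big_split /= -!mulr_sumr; ring.
Qed.

Lemma expand2 (u x : 'rV[R]_N) c :
  E a (fun i => (u ord0 i - c) ^+ 2) x =
  E a (Wuv u u) x - 2 * c * E a (Wu u) x + c ^+ 2 * E a (@W0 N) x.
Proof.
rewrite /E.
have -> : \sum_(i < N) (u ord0 i - c) ^+ 2 * expR (a * x ord0 i) =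
  \sum_(i < N) (Wuv u u i * expR (a * x ord0 i) + (- (2 * c)) * (Wu u i * expR (a * x ord0 i))
    + c ^+ 2 * (@W0 N i * expR (a * x ord0 i))).
  by apply: eq_bigr => i _; rewrite /Wuv /Wu /W0; ring.
rewrite !big_split /= -!mulr_sumr; ring.
Qed.

Lemma d_le (v x : 'rV[R]_N) : `|E a (Wu v) x / E a (@W0 N) x| <= linf_norm v.
Proof.
have S0p := E0_gt0 a _ hN x.
have hi : 0 <= (E a (@W0 N) x)^-1 by rewrite invr_ge0 ltW.
rewrite normrM (ger0_norm hi) -ler_pdivlMr // ?invr_gt0 // invrK.
apply: (le_trans (ler_norm_sum _ _ _)).
rewrite /E mulr_sumr; apply: ler_sum => i _.
rewrite normrM (ger0_norm (expR_ge0 _)) /W0 mul1r.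
by rewrite ler_wpM2r ?expR_ge0 // vi_le.
Qed.

Lemma subr_ge0_2 (p q : R) : p <= q -> 0 <= q - p.
Proof. by rewrite subr_ge0. Qed.

Lemma bound (ha : 0 <= a) (u v x : 'rV[R]_N) :
  `|D3 u v x| <= 2 * a * linf_norm v * D2 u x.
Proof.
have S0p := E0_gt0 a _ hN x.
have S0n : E a (@W0 N) x != 0 by rewrite gt_eqF.
set c := E a (Wu u) x / E a (@W0 N) x.
set d := E a (Wu v) x / E a (@W0 N) x.
set n := linf_norm v.
have hd : `|d| <= n by exact: d_le.
have e3 : D3 u v x = a * a * a / E a (@W0 N) x * E a (fun i => (u ord0 i - c) ^+ 2 * (v ord0 i - d)) x.
  rewrite expand3 /D3 /c /d; field; done.
have e2 : D2 u x = a * a / E a (@W0 N) x * E a (fun i => (u ord0 i - c) ^+ 2) x.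
  rewrite expand2 /D2 /c; field; done.
have key : `|E a (fun i => (u ord0 i - c) ^+ 2 * (v ord0 i - d)) x| <=
    2 * n * E a (fun i => (u ord0 i - c) ^+ 2) x.
  apply: (le_trans (ler_norm_sum _ _ _)).
  rewrite /E mulr_sumr; apply: ler_sum => i _.
  rewrite !normrM (ger0_norm (expR_ge0 _)).
  have -> : `|u ord0 i - c| * `|u ord0 i - c| = (u ord0 i - c) ^+ 2.
    by rewrite -normrM -expr2 ger0_norm // sqr_ge0.
  have hvd : `|v ord0 i - d| <= 2 * n.
    apply: (le_trans (ler_normB _ _)).
    have := vi_le v i; rewrite -/n => hv. lra.
  have hW := sqr_ge0 (u ord0 i - c).
  have hE := expR_ge0 (a * x ord0 i).
  have := mulr_ge0 (mulr_ge0 hW hE) (subr_ge0_2 _ _ hvd).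
  move: hW hE hvd; set W := (u ord0 i - c) ^+ 2; set e := expR _; set t := `|_|.
  move=> *; nra.
rewrite e3 e2 normrM ger0_norm; last first.
  by rewrite divr_ge0 ?(ltW S0p) // !mulr_ge0.
have hA : 0 <= a * a * a / E a (@W0 N) x by rewrite divr_ge0 ?(ltW S0p) // !mulr_ge0.
apply: (le_trans (ler_wpM2l hA key)).
rewrite le_eqVlt; apply/orP; left; apply/eqP; field; done.
Qed.

End Psi.

Lemma dK (c : R) : is_derive (0:R) 1 (fun _ : R => c) 0.
Proof. exact: is_derive_cst. Qed.

Lemma lin1 (s t : R) : is_derive (0:R) 1 (fun h : R => h * s + t) s.
Proof.
apply: is_derive_eq.
by rewrite scale0r add0r addr0 /GRing.scale /= mulr1.
Qed.

End S.

Arguments dir1 {R V}. Arguments claim1 {R}. Arguments claim2 {R}. Arguments claim3 {R}. Arguments bound {R}.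
Arguments dD {R}. Arguments dC {R}. Arguments lin1 {R}. Arguments dK {R}.
Arguments D1 {R}. Arguments D2 {R}. Arguments D3 {R}. Arguments W0 {R}. Arguments E {R} a {N} w y. Arguments Wu {R N}.

Theorem proposition6p9 (R : realType) (N : nat) (hN : (0 < N)%N)
    (eta : R) (heta : 0 < eta) :
  gen_self_concordant2 (@Psi R eta N) (@linf_norm R N)
    (2 * Num.sqrt 2 * eta) setT /\
  gen_self_concordant2 (@logPhi R eta N) (fun z => linf_norm z.1)
    (2 * Num.sqrt 2 * eta) setT.
Proof.
set a := Num.sqrt 2 * eta.
have ha : 0 <= a by rewrite /a mulr_ge0 ?sqrtr_ge0 // ltW.
have hM : 2 * Num.sqrt 2 * eta = 2 * a by rewrite /a mulrA.
rewrite hM.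
have psiE : @Psi R eta N = (fun y : 'rV[R]_N => ln (E a (W0 N) y)).
  apply/funext => y; rewrite /Psi /E; congr ln; apply: eq_bigr => i _.
  by rewrite /W0 mul1r.
have H1 : forall u y, is_derive y u (@Psi R eta N) (D1 a N u y).
  by move=> u y; rewrite psiE; apply: dir1; exact: claim1.
have eqD1 : forall u, 'D_u (@Psi R eta N) = D1 a N u.
  by move=> u; apply/funext => y; have [_ ->] := H1 u y.
have H2 : forall u y, is_derive y u (D1 a N u) (D2 a N u y).
  by move=> u y; apply: dir1; exact: claim2.
have eqD2 : forall u, 'D_u (D1 a N u) = D2 a N u.
  by move=> u; apply/funext => y; have [_ ->] := H2 u y.
have H3 : forall u v x, is_derive x v (D2 a N u) (D3 a N u v x).
  by move=> u v x; apply: dir1; exact: claim3.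
split.
  move=> x _ u v; split.
  - by case: (H1 u x).
  - rewrite eqD1; by case: (H2 u x).
  - rewrite eqD1 eqD2; by case: (H3 u v x).
  - rewrite eqD1 eqD2 (@derive_val _ _ _ _ _ _ _ (H3 u v x)). have [_ ->] := H2 u x. exact: (bound a N hN ha u v x).
move=> [x t] _ [u s] [v r].
have L1 : forall y t', is_derive (y, t') (u, s) (@logPhi R eta N) (- (eta ^+ 2) * s + D1 a N u y).
  move=> y t'; apply: dir1.
  have -> : (fun h : R => @logPhi R eta N (h *: (u, s) + (y, t'))) =
      (fun h => - (eta ^+ 2) * (h * s + t') + ln (E a (W0 N) (h *: u + y))).
    by apply/funext => h; rewrite /logPhi psiE.
  apply: is_derive_eq; first exact: (dD _ _ _ _ (dC _ (- eta ^+ 2) _ (lin1 s t')) (claim1 a N hN u y)).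
  by [].
have eqL1 : 'D_(u, s) (@logPhi R eta N) = (fun z : 'rV[R]_N * R => - (eta ^+ 2) * s + D1 a N u z.1).
  by apply/funext => -[y t']; have [_ ->] := L1 y t'.
have L2 : forall y t', is_derive (y, t') (u, s) (fun z : 'rV[R]_N * R => - (eta ^+ 2) * s + D1 a N u z.1) (D2 a N u y).
  move=> y t'; apply: dir1.
  have -> : (fun h : R => (fun z : 'rV[R]_N * R => - (eta ^+ 2) * s + D1 a N u z.1) (h *: (u, s) + (y, t'))) =
      (fun h => - (eta ^+ 2) * s + D1 a N u (h *: u + y)) by [].
  apply: is_derive_eq.
    exact: (dD _ _ _ _ (dK (- eta ^+ 2 * s)) (claim2 a N hN u y)).
  by rewrite add0r.
have eqL2 : 'D_(u, s) (fun z : 'rV[R]_N * R => - (eta ^+ 2) * s + D1 a N u z.1) = (fun z : 'rV[R]_N * R => D2 a N u z.1).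
  by apply/funext => -[y t']; have [_ ->] := L2 y t'.
have L3 : is_derive (x, t) (v, r) (fun z : 'rV[R]_N * R => D2 a N u z.1) (D3 a N u v x).
  apply: dir1.
  have -> : (fun h : R => (fun z : 'rV[R]_N * R => D2 a N u z.1) (h *: (v, r) + (x, t))) =
      (fun h => D2 a N u (h *: v + x)) by [].
  exact: claim3.
split.
- by case: (L1 x t).
- rewrite eqL1; by case: (L2 x t).
- rewrite eqL1 eqL2; by case: L3.
- rewrite eqL1 eqL2 (@derive_val _ _ _ _ _ _ _ L3).
  have [_ ->] := L2 x t. exact: (bound a N hN ha u v x).
Qed.
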